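(* Let $p_n(\mathbf y)$ be a linear sequence of symmetric functions of binomial type in the variables $\mathbf y=(y_1,y_2,\dots)$. Then for every complex number $a$ and every $n\ge0$, $$p_n(a,y_1,y_2,\dots)=\sum_{k=0}^n\binom nk\,p_k(a,0,0,\dots)\,p_{n-k}(y_1,y_2,\dots).$$
   Context: A linear sequence of symmetric functions of binomial type is a sequence of the form $$p_n(\mathbf y)=\sum_{\lambda\vdash n}\frac{n!}{\prod_i\lambda_i!}\Big(\prod_ia_{\lambda_i}\Big)m_\lambda(\mathbf y),$$ where $(a_i)_{i\ge0}$ is a sequence of complex numbers (a quasi-species) with $a_0=1$, $a_1\ne0$, and $m_\lambda$ is the monomial symmetric function. For a species, $a_i$ is the number of structures on an $i$-set, and $p_n$ enumerates enriched functions from $\{1,\dots,n\}$ to $\{y_1,y_2,\dots\}$. For a symmetric function $p$, the expression $p(a,y_1,y_2,\dots)$ denotes $p$ evaluated at the variable list $(a,y_1,y_2,\dots)$, and $p(a,0,0,\dots)$ its evaluation with all variables but the first set to $0$. *)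

(* Defs.v *)
From HB Require Import structures.
From mathcomp Require Import all_boot all_order all_algebra.
From mathcomp Require Import complex.
From mathcomp Require Import reals.
Set Implicit Arguments. Unset Strict Implicit. Unset Printing Implicit Defensive.
Import Order.TTheory GRing.Theory Num.Theory.
Local Open Scope ring_scope.

Definition is_partition (n : nat) (l : seq nat) : bool :=
  [&& sorted geq l, all (fun k => 0 < k)%N l & sumn l == n].

Definition cand_seqs (n : nat) : seq (seq nat) :=
  flatten [seq [seq [seq nat_of_ord i | i <- fgraph f]
               | f <- enum {ffun 'I_m -> 'I_n.+1}] | m <- iota 0 n.+1].

Definition partitions (n : nat) : seq (seq nat) :=
  undup [seq l <- cand_seqs n | is_partition n l].

(* monomial symmetric function m_lambda evaluated at the finite list of
   variables x = (x_0, ..., x_{m-1}) : sum of x^alpha over all exponent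
   vectors alpha whose nonzero entries, sorted decreasingly, give lambda. *)
Definition msym (C : comPzRingType) (l : seq nat) (x : seq C) : C :=
  \sum_(al : {ffun 'I_(size x) -> 'I_(sumn l).+1}
         | sort geq [seq k <- [seq nat_of_ord (al i) | i <- enum 'I_(size x)]
                    | (0 < k)%N] == l)
    \prod_(i < size x) x`_i ^+ al i.

(* linear sequence of symmetric functions of binomial type attached to the
   quasi-species a, evaluated at the finite list of variables x:
   p_n(x) = sum_{lambda |- n} n!/prod lambda_i! * prod a_{lambda_i} * m_lambda(x) *)
Definition pbin (C : fieldType) (a : nat -> C) (n : nat) (x : seq C) : C :=
  \sum_(l <- partitions n)
     (n`!%:R / (\prod_(i <- l) i`!)%:R) * (\prod_(i <- l) a i) * msym l x.

(* Main.v *)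
Require Import Defs.
From HB Require Import structures.
From mathcomp Require Import all_boot all_order all_algebra.
From mathcomp Require Import complex.
From mathcomp Require Import reals.
From mathcomp Require Import zify ring.
Set Implicit Arguments. Unset Strict Implicit. Unset Printing Implicit Defensive.
Import Order.TTheory GRing.Theory Num.Theory.

Definition sv m B (al : {ffun 'I_m -> 'I_B}) : seq nat :=
  sort geq [seq k <- [seq nat_of_ord (al i) | i <- enum 'I_m] | (0 < k)%N].

Lemma big_sv (R : Type) (idx : R) (op : Monoid.com_law idx) m B
  (al : {ffun 'I_m -> 'I_B}) (F : nat -> R) :
  F 0%N = idx -> \big[op/idx]_(j <- sv al) F j = \big[op/idx]_(i < m) F (al i : nat).
Proof.
move=> F0; rewrite /sv (perm_big _ (permEl (perm_sort _ _))) big_filter big_mkcond big_map big_enum /=.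
by apply: eq_bigr => i _; case: (al i) => [[|k] ?] /=; rewrite ?F0.
Qed.

Lemma sumn_sv m B (al : {ffun 'I_m -> 'I_B}) : sumn (sv al) = \sum_(i < m) al i.
Proof. by rewrite sumnE (@big_sv _ _ addn _ _ al (fun j => j)). Qed.

Lemma size_le_sumn s : all (fun k => 0 < k)%N s -> (size s <= sumn s)%N.
Proof. elim: s => //= k s IH /andP [k0 /IH]; lia. Qed.

Lemma mem_le_sumn s k : k \in s -> (k <= sumn s)%N.
Proof.
elim: s => //= j s IH; rewrite inE => /orP [/eqP -> | /IH]; lia.
Qed.

Lemma cand_seqsP n l : (size l <= n)%N -> all (fun k => k <= n)%N l -> l \in cand_seqs n.
Proof.
move=> szl alll; apply/flatten_mapP; exists (size l); first by rewrite mem_iota; lia.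
apply/mapP; exists [ffun i : 'I_(size l) => (inord (nth 0%N l i) : 'I_n.+1)].
  by rewrite mem_enum.
rewrite -codom_ffun codomE -map_comp.
rewrite (eq_map (g := nth 0%N l \o val)); last first.
  move=> i /=; rewrite ffunE inordK //; apply: (allP alll); exact: mem_nth.
by rewrite map_comp val_enum_ord -/(mkseq _ _) mkseq_nth.
Qed.

Lemma sv_partitions m B n (al : {ffun 'I_m -> 'I_B}) :
  (sv al \in partitions n) = (\sum_(i < m) (al i : nat) == n)%N.
Proof.
rewrite mem_undup mem_filter -sumn_sv.
apply/andP/idP => [[/and3P [_ _ //]] | /eqP sn].
have pos : all (fun k => 0 < k)%N (sv al) by rewrite all_sort filter_all.
split.
  apply/and3P; split => //; last by rewrite sn.
  by apply: sort_sorted => x y; exact: leq_total.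
apply: cand_seqsP; first by rewrite -sn size_le_sumn.
by apply/allP => k /mem_le_sumn; rewrite sn.
Qed.
Local Open Scope ring_scope.

Lemma le_sum_sv m B (al : {ffun 'I_m -> 'I_B}) i : (al i <= sumn (sv al))%N.
Proof. by rewrite sumn_sv (bigD1 i) //= leq_addr. Qed.

Lemma msymB (C : comPzRingType) (l : seq nat) (x : seq C) B :
  (sumn l <= B)%N ->
  msym l x = \sum_(al : {ffun 'I_(size x) -> 'I_B.+1} | sv al == l)
               \prod_(i < size x) x`_i ^+ al i.
Proof.
move=> lB.
have le : ((sumn l).+1 <= B.+1)%N by [].
rewrite (reindex_onto (fun j : {ffun 'I_(size x) -> 'I_(sumn l).+1} =>
                         [ffun i => widen_ord le (j i)])
                      (fun j => [ffun i => inord (j i)])) /=; last first.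
  move=> j /eqP svj; apply/ffunP => i; rewrite !ffunE; apply/val_inj => /=.
  by rewrite inordK // ltnS -svj le_sum_sv.
rewrite /msym; apply: eq_big => [j|j _]; last first.
  by apply: eq_bigr => i _; rewrite ffunE.
have -> : [ffun i => inord ([ffun i0 => widen_ord le (j i0)] i)] = j.
  by apply/ffunP => i; rewrite !ffunE /= inord_val.
rewrite eqxx andbT /sv; congr (sort _ _ == _); congr filter.
by apply: eq_map => i; rewrite ffunE.
Qed.

Lemma big_seq_pred1 (C : nmodType) (T : eqType) (L : seq T) (t : T) (G : T -> C) :
  uniq L -> \sum_(l <- L) (if t == l then G l else 0) = if t \in L then G t else 0.
Proof.
elim: L => [|l L IH] /=; first by rewrite big_nil.
move=> /andP [lL uL]; rewrite big_cons IH // inE.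
case: (t =P l) => [->|_] /=; last by rewrite add0r.
by rewrite (negbTE lL) addr0.
Qed.

Lemma pbinE (C : fieldType) (a : nat -> C) (a0 : a 0%N = 1) n B (x : seq C) :
  (n <= B)%N ->
  pbin a n x = \sum_(al : {ffun 'I_(size x) -> 'I_B.+1} | (\sum_(i < size x) (al i : nat))%N == n)
     n`!%:R * \prod_(i < size x) (a (al i) * x`_i ^+ al i / (al i)`!%:R).
Proof.
move=> nB.
rewrite /pbin.
rewrite (eq_big_seq (fun l => \sum_(al : {ffun 'I_(size x) -> 'I_B.+1})
    (if sv al == l then n`!%:R / (\prod_(i <- l) i`!)%:R * \prod_(i <- l) a i *
        \prod_(i < size x) x`_i ^+ al i else 0))); last first.
  move=> l; rewrite mem_undup mem_filter => /andP [/and3P [_ _ /eqP sl] _].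
  rewrite (@msymB _ _ _ B); last by rewrite sl.
  by rewrite mulr_sumr big_mkcond.
rewrite exchange_big /= [RHS]big_mkcond /=.
apply: eq_bigr => al _.
rewrite big_seq_pred1 ?undup_uniq // sv_partitions.
case: eqP => // _.
rewrite (@big_sv _ _ muln _ _ al) // (@big_sv _ _ (GRing.mul) _ _ al) //.
rewrite -!mulrA; congr (_ * _).
rewrite natr_prod -prodfV -!big_split /=.
by apply: eq_bigr => i _; rewrite mulrC.
Qed.
Definition Pp (C : fieldType) (a : nat -> C) B (x : seq C) : {poly C} :=
  \prod_(i < size x) \poly_(j < B.+1) (a j * x`_i ^+ j / j`!%:R).

Lemma coefPp (C : fieldType) (a : nat -> C) B (x : seq C) n :
  (Pp a B x)`_n = \sum_(al : {ffun 'I_(size x) -> 'I_B.+1} | (\sum_(i < size x) (al i : nat))%N == n)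
     \prod_(i < size x) (a (al i) * x`_i ^+ al i / (al i)`!%:R).
Proof.
rewrite /Pp; under eq_bigr do rewrite poly_def.
rewrite bigA_distr_bigA /= coef_sum [RHS]big_mkcond; apply: eq_bigr => al _.
under eq_bigr do rewrite -mul_polyC.
rewrite big_split /= -rmorph_prod.
rewrite -(big_morph (fun k => 'X^k) (exprD 'X) (expr0 'X)).
rewrite coefCM coefXn eq_sym; case: eqP => _; by rewrite ?mulr1 ?mulr0.
Qed.

Lemma pbinP (C : fieldType) (a : nat -> C) (a0 : a 0%N = 1) n B (x : seq C) :
  (n <= B)%N -> pbin a n x = n`!%:R * (Pp a B x)`_n.
Proof. by move=> nB; rewrite (pbinE a0 _ nB) coefPp mulr_sumr. Qed.

Lemma Pp_cons (C : fieldType) (a : nat -> C) B c (x : seq C) :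
  Pp a B (c :: x) = \poly_(j < B.+1) (a j * c ^+ j / j`!%:R) * Pp a B x.
Proof. by rewrite /Pp big_ord_recl. Qed.

Lemma Pp_nseq (C : fieldType) (a : nat -> C) (a0 : a 0%N = 1) B m :
  Pp a B (nseq m 0) = 1.
Proof.
rewrite /Pp big1 // => i _; apply/polyP => j.
rewrite coef_poly coefC nth_nseq if_same.
case: j => [|j] /=; first by rewrite a0 expr0 mulr1 invr1 mulr1.
by rewrite expr0n mulr0 mul0r; case: ifP.
Qed.

Local Open Scope complex_scope.

Theorem mainTheorem5 (R : realType) (a : nat -> R[i])
  (ha0 : a 0%N = 1) (ha1 : a 1%N != 0)
  (c : R[i]) (n : nat) (y : seq R[i]) :
  pbin a n (c :: y) =
  \sum_(k < n.+1)
     'C(n, k)%:R * pbin a k (c :: nseq (size y) 0) * pbin a (n - k) y.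
Proof.
rewrite (pbinP ha0 _ (leqnn n)) Pp_cons coefM mulr_sumr.
apply: eq_bigr => k _.
have kn : (k <= n)%N by rewrite -ltnS.
rewrite (pbinP ha0 _ kn) (pbinP ha0 _ (leq_subr k n)) Pp_cons Pp_nseq // mulr1.
rewrite !coef_poly ltn_ord.
rewrite -(bin_fact kn) !natrM.
have : (k`!%:R : R[i]) != 0 by rewrite pnatr_eq0 -lt0n fact_gt0.
by move=> nz; field.
Qed.
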